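(* Let $G$ be a connected graph and $P$ an isometric path in $G$ of length at least $2$. For every $v\in V(G)\setminus V(P)$, we have $|S_P(v)|=1$ if and only if there exists a bypath $B$ of $P$ in $G$ such that $v\in V(B)$.
   Context: $d$ denotes distance in $G$. A path $P$ in $G$ is isometric if $d_P(x,y)=d_G(x,y)$ for all $x,y\in V(P)$. The wide shadow of $v\in V(G)$ on $P$ is $S_P(v)=\{y\in V(P): d(y,x)\le d(v,x)\text{ for all }x\in V(P)\}$. For a subgraph $H$ of $G$ and an isometric path $P=v_1v_2\cdots v_k$ in $H$, a bypath of $P$ in $H$ is a path $B=b_1b_2\cdots b_t$ with $t\ge3$ and $V(B)\subseteq V(H)$, such that $b_1=v_i$, $b_t=v_j$ for some $1\le i<j\le k$, $V(B)\cap V(P)=\{v_i,v_j\}$, and the path $v_1\cdots v_i b_2\cdots b_{t-1} v_j\cdots v_k$ is also an isometric path in $H$. (Here $H=G$.) *)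

(* Defs.v *)
(* Finite simple graphs as symmetric irreflexive relations. *)
From mathcomp Require Import all_boot.
Set Implicit Arguments. Unset Strict Implicit. Unset Printing Implicit Defensive.

Section Graphs.
Variable T : finType.
Variable e : rel T.

Definition connected_graph : Prop := forall x y : T, connect e x y.

Definition walkn (x y : T) (n : nat) : bool :=
  [exists p : n.-tuple T, path e x p && (last x p == y)].

(* graph distance d_G(x,y): least n with a walk of length n from x to y.
   In a connected finite graph some walk of length < #|T| exists, so the
   search over 0..#|T|-1 returns the true distance. *)
Definition dist (x y : T) : nat := find (walkn x y) (iota 0 #|T|).

Definition is_path (s : seq T) : bool :=
  [&& s != [::], uniq s & sorted e s].

Definition path_dist (s : seq T) (x y : T) : nat :=
  (index x s - index y s) + (index y s - index x s).

Definition isometric_path (s : seq T) : Prop :=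
  is_path s /\ {in s &, forall x y, path_dist s x y = dist x y}.

Definition shadow (s : seq T) (v : T) : {set T} :=
  [set y | (y \in s) && [forall x in s, dist y x <= dist v x]].

(* B is a bypath of P = P1 ++ v_i :: P2 ++ v_j :: P3 : B = v_i b_2 .. b_{t-1} v_j
   with t >= 3 (mid nonempty), B a path, V(B) cap V(P) = {v_i, v_j}, and
   P1 ++ v_i :: mid ++ v_j :: P3 an isometric path. *)
Definition bypath (P B : seq T) : Prop :=
  exists (P1 P2 P3 mid : seq T) (vi vj : T),
    [/\ P = P1 ++ vi :: P2 ++ vj :: P3,
        B = vi :: mid ++ [:: vj],
        mid != [::],
        is_path B &
        (forall y, y \in B -> y \in P -> y = vi \/ y = vj) ] /\
    isometric_path (P1 ++ vi :: mid ++ vj :: P3).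

End Graphs.

(* Main.v *)
Require Import Defs.
From mathcomp Require Import all_boot zify.
Set Implicit Arguments. Unset Strict Implicit. Unset Printing Implicit Defensive.

Section Aux.
Variable T : finType.
Variable e : rel T.

Lemma walknP x y n : reflect (exists g : nat -> T,
  [/\ g 0 = x, g n = y & forall r, r < n -> e (g r) (g r.+1)]) (walkn e x y n).
Proof.
apply: (iffP existsP).
  case=> p /andP [Hp /eqP Hl].
  exists (fun r => nth x (x :: p) r); split => //.
    by have := nth_last x (x :: p); rewrite /= size_tuple Hl.
  by move=> r Hr; move/(pathP x): Hp; apply; rewrite size_tuple.
case=> g [H0 Hn Ha].
have Hs : size (mkseq (fun r => g r.+1) n) == n by rewrite size_mkseq.
exists (Tuple Hs) => /=; apply/andP; split.
  apply/(pathP x) => r; rewrite size_mkseq => Hr.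
  rewrite nth_mkseq //; case: r Hr => [|r] Hr /=; first by rewrite -H0; apply: Ha.
  by rewrite nth_mkseq; [apply: Ha | lia].
case: n Hn Ha Hs => [|n] Hn Ha Hs /=; first by rewrite -H0 -Hn.
apply/eqP; rewrite -Hn; case: n {Hn Ha Hs} => [|n] //.
have := nth_last (g 1) [seq g r.+1 | r <- iota 1 n.+1]; rewrite size_map size_iota => <-.
by rewrite (nth_map 0) ?size_iota // nth_iota // add1n.
Qed.

Lemma walk_fun (g : nat -> T) s t : s <= t ->
  (forall r, s <= r -> r < t -> e (g r) (g r.+1)) -> walkn e (g s) (g t) (t - s).
Proof.
move=> Hst Ha; apply/walknP; exists (fun r => g (s + r)); split.
- by rewrite addn0.
- by congr g; lia.
- by move=> r Hr; rewrite addnS; apply: Ha; lia.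
Qed.

Hypothesis esym : symmetric e.
Hypothesis conn : connected_graph e.

Lemma walk_short x y : exists n, (n < #|T|) && walkn e x y n.
Proof.
have /connectP [p Hp ->] := conn x y.
case: (shortenP Hp) => p' Hp' Hu _.
exists (size p'); apply/andP; split.
  have := max_card (mem (x :: p')); rewrite (card_uniqP Hu) /=; lia.
apply/existsP; exists (in_tuple p'); by rewrite /= Hp' eqxx.
Qed.

Lemma dist_walk x y : walkn e x y (dist e x y).
Proof.
have [n /andP [Hn Hw]] := walk_short x y.
have Hh : has (walkn e x y) (iota 0 #|T|).
  by apply/hasP; exists n => //; rewrite mem_iota.
have Hf : find (walkn e x y) (iota 0 #|T|) < #|T| by move: Hh; rewrite has_find size_iota.
by have := nth_find 0 Hh; rewrite nth_iota.
Qed.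

Lemma dist_le x y n : walkn e x y n -> dist e x y <= n.
Proof.
move=> Hw; have [m /andP [Hm Hwm]] := walk_short x y.
have Hh : has (walkn e x y) (iota 0 #|T|).
  by apply/hasP; exists m => //; rewrite mem_iota.
have Hf : dist e x y < #|T| by move: Hh; rewrite has_find size_iota.
case: (ltnP n #|T|) => Hn; last by lia.
rewrite leqNgt; apply/negP => Hlt.
have := before_find 0 Hlt; rewrite nth_iota // Hw //.
Qed.

Lemma dist_fun (g : nat -> T) s t : s <= t ->
  (forall r, s <= r -> r < t -> e (g r) (g r.+1)) -> dist e (g s) (g t) <= t - s.
Proof. by move=> H1 H2; apply: dist_le; apply: walk_fun. Qed.

Lemma dist_tri x y z : dist e x z <= dist e x y + dist e y z.
Proof.
apply: dist_le.
have /walknP [g1 [H10 H1n H1a]] := dist_walk x y.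
have /walknP [g2 [H20 H2n H2a]] := dist_walk y z.
apply/walknP; exists (fun r => if r <= dist e x y then g1 r else g2 (r - dist e x y)); split.
- by rewrite leq0n.
- case: ifP => H.
    have E : dist e y z = 0 by lia.
    by rewrite E addn0 H1n -H2n E H20.
  by rewrite addKn.
- move=> r Hr; case: ifP => Hb1; case: ifP => Hb2.
  + by apply: H1a; lia.
  + have Er : r = dist e x y by lia.
    by rewrite Er subSnn H1n -H20; apply: H2a; lia.
  + lia.
  + have -> : r.+1 - dist e x y = (r - dist e x y).+1 by lia.
    by apply: H2a; lia.
Qed.

Lemma dist_sym x y : dist e x y = dist e y x.
Proof.
suff H : forall x y, dist e x y <= dist e y x by apply/eqP; rewrite eqn_leq !H.
move=> a b; apply: dist_le.
have /walknP [g [H0 Hn Ha]] := dist_walk b a.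
apply/walknP; exists (fun r => g (dist e b a - r)); split.
- by rewrite subn0.
- by rewrite subnn.
- move=> r Hr; rewrite esym; have -> : dist e b a - r = (dist e b a - r.+1).+1 by lia.
  apply: Ha; lia.
Qed.

Lemma dist0 x y : dist e x y = 0 -> x = y.
Proof. move=> H; have /walknP [g [H0 Hn _]] := dist_walk x y. by rewrite -H0 -Hn H. Qed.

Lemma dist_xx x : dist e x x = 0.
Proof. apply/eqP; rewrite -leqn0; apply: dist_le; apply/walknP; by exists (fun _ => x). Qed.

Lemma dist1 x y : dist e x y = 1 -> e x y.
Proof. move=> H; have /walknP [g [H0 Hn Ha]] := dist_walk x y. rewrite H in Hn Ha. by rewrite -H0 -Hn; apply: Ha. Qed.

Lemma geo (g : nat -> T) n : (forall r, r < n -> e (g r) (g r.+1)) ->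
  n <= dist e (g 0) (g n) ->
  forall s t, s <= n -> t <= n -> dist e (g s) (g t) = (s - t) + (t - s).
Proof.
move=> Ha Hn.
suff H : forall s t, s <= t -> t <= n -> dist e (g s) (g t) = t - s.
  move=> s t Hs Ht; case: (leqP s t) => H'.
    by rewrite H //; lia.
  by rewrite dist_sym H //; lia.
move=> s t Hst Htn.
have U : forall a b, a <= b -> b <= n -> dist e (g a) (g b) <= b - a.
  by move=> a b Hab Hb; apply: dist_fun => // r _ Hr; apply: Ha; lia.
have := U s t Hst Htn; have := U 0 s (leq0n _) (leq_trans Hst Htn); have := U t n Htn (leqnn _).
have := dist_tri (g 0) (g s) (g n); have := dist_tri (g s) (g t) (g n). lia.
Qed.


Lemma mkseq_add (f : nat -> T) m n :
  mkseq f (m + n) = mkseq f m ++ mkseq (fun r => f (m + r)) n.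
Proof.
rewrite /mkseq iotaD map_cat add0n; congr (_ ++ _).
by rewrite -{1}[m]addn0 iotaDl -map_comp.
Qed.

Lemma mkseq_split1 (f : nat -> T) i k : i < k ->
  mkseq f k = mkseq f i ++ f i :: mkseq (fun r => f (i.+1 + r)) (k - i.+1).
Proof.
move=> H; set n := k - i.+1; have -> : k = i + (1 + n) by rewrite /n; lia.
rewrite mkseq_add; congr (_ ++ _); rewrite mkseq_add /= addn0; congr (_ :: _).
by apply: eq_mkseq => r /=; congr f; lia.
Qed.

Lemma mkseq_split (f : nat -> T) i j k : i < j -> j < k ->
  mkseq f k = mkseq f i ++ f i :: mkseq (fun r => f (i.+1 + r)) (j - i.+1)
     ++ f j :: mkseq (fun r => f (j.+1 + r)) (k - j.+1).
Proof.
move=> Hij Hjk; rewrite (mkseq_split1 f (i := i)); last by lia.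
congr (_ ++ _ :: _).
rewrite (mkseq_split1 _ (i := j - i.+1)); last by lia.
congr (_ ++ _ :: _); first by congr f; lia.
have -> : k - i.+1 - (j - i.+1).+1 = k - j.+1 by lia.
by apply: eq_mkseq => r /=; congr f; lia.
Qed.

Lemma iso_mkseq (g : nat -> T) n : 0 < n ->
  (forall r s, r < n -> s < n -> dist e (g r) (g s) = (r - s) + (s - r)) ->
  isometric_path e (mkseq g n).
Proof.
move=> Hn D; split.
  apply/and3P; split.
  - by rewrite -size_eq0 size_mkseq -lt0n.
  - rewrite map_inj_in_uniq ?iota_uniq // => r s; rewrite !mem_iota => Hr Hs E.
    by have := D r s; rewrite E dist_xx; lia.
  - case: n Hn D => [//|n] _ D.
    rewrite (mkseq_split1 g (i := 0)) //= subn1 /=.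
    apply/(pathP (g 0)) => r; rewrite size_mkseq => Hr.
    rewrite nth_mkseq //; case: r Hr => [|r] Hr /=.
      by apply: dist1; rewrite D //; lia.
    by rewrite nth_mkseq; [apply: dist1; rewrite D //; lia | lia].
move=> x y /mapP [r Hr ->] /mapP [s Hs ->]; rewrite mem_iota in Hr Hs.
have Hu : uniq (mkseq g n).
  rewrite map_inj_in_uniq ?iota_uniq // => a b; rewrite !mem_iota => Ha Hb E.
  by have := D a b; rewrite E dist_xx; lia.
have I : forall a, a < n -> index (g a) (mkseq g n) = a.
  by move=> a Ha; rewrite -{1}(nth_mkseq (g 0) g Ha) index_uniq ?size_mkseq.
have Hs2 : s < n by move: Hs; rewrite mem_iota; lia.
have Hr2 : r < n by lia.
by rewrite /path_dist !I ?D //; lia.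
Qed.

Lemma iso_nth s x0 : isometric_path e s -> forall r t, r < size s -> t < size s ->
  dist e (nth x0 s r) (nth x0 s t) = (r - t) + (t - r).
Proof.
case=> /and3P [_ Hu _] H r t Hr Ht; rewrite -H ?mem_nth //.
by rewrite /path_dist !index_uniq.
Qed.

End Aux.
Lemma back (T : finType) (e : rel T) :
  symmetric e -> connected_graph e ->
  forall P : seq T, isometric_path e P ->
  forall v : T, v \notin P ->
  (exists B : seq T, bypath e P B /\ v \in B) -> #|shadow e P v| = 1.
Proof.
move=> esym conn P HP v HvP [B [[P1 [P2 [P3 [mid [vi [vj [[EP EB Hmid HB Hint] HP']]]]]]] HvB]].
set P' := P1 ++ vi :: mid ++ vj :: P3 in HP'.
set k := size P.
set X := nth v P.
set Y := nth v P'.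
have DX : forall r t, r < size P -> t < size P -> dist e (X r) (X t) = r - t + (t - r) := iso_nth v HP.
have DY : forall r t, r < size P' -> t < size P' -> dist e (Y r) (Y t) = r - t + (t - r) := iso_nth v HP'.
have Tri := dist_tri conn. have Dsym := dist_sym esym conn.
set i := size P1. set j := i + (size P2).+1.
have Hk : size P = j + (size P3).+1 by rewrite EP size_cat /= size_cat /= /j /i; lia.
have Hk' : size P' = i + (size mid).+1 + (size P3).+1 by rewrite /P' size_cat /= size_cat /= /i; lia.
have Xi : X i = vi by rewrite /X EP nth_cat ltnn subnn.
have Xj : X j = vj.
  by rewrite /X EP -cat_cons catA nth_cat size_cat /= /j /i ltnn subnn.
have Yi : Y i = vi by rewrite /Y /P' nth_cat ltnn subnn.
have Yj : Y (i + (size mid).+1) = vj.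
  by rewrite /Y /P' -cat_cons catA nth_cat size_cat /= /i ltnn subnn.
have vmid : v \in mid.
  move: HvB; rewrite EB inE mem_cat inE => /or3P [/eqP E|//|/eqP E].
  - by move: HvP; rewrite E EP mem_cat inE eqxx orbT.
  - by move: HvP; rewrite E EP mem_cat inE mem_cat inE eqxx !orbT.
set m := (index v mid).+1.
have Hm : m <= size mid by rewrite /m index_mem.
have Yv : Y (i + m) = v.
  by rewrite /Y /P' nth_cat ltnNge leq_addr /= addKn /m /= nth_cat index_mem vmid nth_index.
have Esz : size mid = size P2.
  have := DX i j; have := DY i (i + (size mid).+1); rewrite Xi Xj Yi Yj; lia.
have Dvi : dist e v vi = m by rewrite -Yv -Yi DY; lia.
have Dvj : dist e v vj = (size mid).+1 - m by rewrite -Yv -Yj DY; lia.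
apply/eqP/cards1P; exists (X (i + m)); apply/setP => z; rewrite in_set1 inE.
apply/idP/eqP.
  case/andP=> /[dup] Hz + /forallP H.
  move=> /(nthP v) [q Hq Ez]; subst z.
  have H1 := H (X i); rewrite mem_nth /= in H1; last by lia.
  have H2 := H (X j); rewrite mem_nth /= in H2; last by lia.
  rewrite -/X in H1 H2. rewrite DX in H1; try lia. rewrite DX in H2; try lia.
  rewrite Xi Dvi in H1. rewrite Xj Dvj in H2.
  by rewrite /X; congr nth; lia.
all: try exact Hq. move=> ->; rewrite mem_nth /=; last by lia.
apply/forallP => x; apply/implyP => /(nthP v) [l Hl Ex]; subst x; rewrite -/X.
have T1 := Tri (X i) v (X l); have T2 := Tri (X j) v (X l).
have Dvi' : dist e (X i) v = m by rewrite Dsym Xi.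
have Dvj' : dist e (X j) v = (size mid).+1 - m by rewrite Dsym Xj.
rewrite Dvi' DX in T1; try exact Hl; try lia. rewrite Dvj' DX in T2; try exact Hl; try lia.
rewrite DX; try exact Hl; try lia. all: try exact Hl.
Qed.
Lemma fwd (T : finType) (e : rel T) :
  symmetric e -> connected_graph e ->
  forall P : seq T, isometric_path e P -> 3 <= size P ->
  forall v : T, v \notin P ->
  #|shadow e P v| = 1 -> exists B : seq T, bypath e P B /\ v \in B.
Proof.
move=> esym conn P HP Hk3 v HvP /eqP/cards1P [y Hy].
set k := size P in Hk3 *.
set X := nth v P.
have DX : forall r t, r < k -> t < k -> dist e (X r) (X t) = r - t + (t - r) := iso_nth v HP.
have Tri := dist_tri conn. have Dsym := dist_sym esym conn.
have memX : forall r, r < k -> X r \in P by move=> r Hr; apply: mem_nth.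
have inP : forall z, z \in P -> exists2 r, r < k & z = X r.
  by move=> z Hz; exists (index z P); [rewrite index_mem | rewrite /X nth_index].
set f := fun l => dist e v (X l).
have fpos : forall l, l < k -> 0 < f l.
  move=> l Hl; rewrite lt0n; apply/negP => /eqP /dist0 E.
  by move: HvP; rewrite (E conn) memX.
have ShC : forall q, q < k -> (X q \in shadow e P v) <-> (forall l, l < k -> q - l + (l - q) <= f l).
  move=> q Hq; rewrite inE memX //=; split.
    by move=> /forallP H l Hl; have := H (X l); rewrite memX //= DX.
  move=> H; apply/forallP => x; apply/implyP => /inP [l Hl ->]; rewrite DX //; exact: H.
have yS : y \in shadow e P v by rewrite Hy set11.
have [p Hp Ey] : exists2 p, p < k & y = X p.
  by apply: inP; move: yS; rewrite inE => /andP [].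
subst y.
have Uq : forall q, q < k -> X q \in shadow e P v -> q = p.
  move=> q Hq; rewrite Hy in_set1 => /eqP E; have := DX q p Hq Hp; rewrite E (dist_xx conn); lia.
have Shp : forall l, l < k -> p - l + (l - p) <= f l by apply/ShC => //; rewrite Hy set11.
have [b Hb Eb] : exists2 b, b < k & b + f b = p.
  case: (boolP (has (fun b => b + f b == p) (iota 0 k))) => [/hasP [b Hb /eqP Eb] | /hasPn Hn].
    by exists b => //; move: Hb; rewrite mem_iota.
  have Hn' : forall l, l < k -> p < l + f l.
    move=> l Hl; have := Hn l; rewrite mem_iota /= => /(_ Hl) /eqP; have := Shp l Hl; lia.
  case: (ltnP p.+1 k) => Hpk.
    have := Uq p.+1 Hpk; rewrite (ShC _ Hpk) => H.
    suff : p.+1 = p by lia.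
    apply: H => l Hl; have := Shp l Hl; have := Hn' l Hl; lia.
  have Hpk' : p.-1 < k by lia.
  have := Uq p.-1 Hpk'; rewrite (ShC _ Hpk') => H.
  suff : p.-1 = p by lia.
  apply: H => l Hl; have := Shp l Hl; have := fpos l Hl; lia.
have [a Ha Ea] : exists2 a, a < k & a = p + f a.
  case: (boolP (has (fun a => a == p + f a) (iota 0 k))) => [/hasP [a Ha /eqP Ea] | /hasPn Hn].
    by exists a => //; move: Ha; rewrite mem_iota.
  have Hn' : forall l, l < k -> l < p + f l.
    move=> l Hl; have := Hn l; rewrite mem_iota /= => /(_ Hl) /eqP; have := Shp l Hl; lia.
  case: (posnP p) => Hp0.
    have H1k : 1 < k by lia.
    have := Uq 1 H1k; rewrite (ShC _ H1k) => H.
    suff : 1 = p by lia.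
    apply: H => l Hl; have := Shp l Hl; have := fpos l Hl; lia.
  have Hpk' : p.-1 < k by lia.
  have := Uq p.-1 Hpk'; rewrite (ShC _ Hpk') => H.
  suff : p.-1 = p by lia.
  apply: H => l Hl; have := Shp l Hl; have := Hn' l Hl; lia.
have fb := fpos b Hb; have fa := fpos a Ha.
have Hbp : b < p by lia.
have Hpa : p < a by lia.
have Db : dist e (X b) v = p - b by rewrite Dsym; rewrite /f in Eb; lia.
have Da : dist e v (X a) = a - p by rewrite /f in Ea; lia.
have /walknP [g1 [G10 G1m G1a]] := dist_walk conn (X b) v. rewrite Db in G1m G1a.
have /walknP [g2 [G20 G2n G2a]] := dist_walk conn v (X a). rewrite Da in G2n G2a.
pose Q := fun t => if t <= p - b then g1 t else g2 (t - (p - b)).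
have QA : forall t, t < a - b -> e (Q t) (Q t.+1).
  move=> t Ht; rewrite /Q; case: ifP => H1; case: ifP => H2.
  + by apply: G1a; lia.
  + have -> : t = p - b by lia.
    by rewrite subSnn G1m -G20; apply: G2a; lia.
  + lia.
  + have -> : t.+1 - (p - b) = (t - (p - b)).+1 by lia.
    by apply: G2a; lia.
have Q0 : Q 0 = X b by rewrite /Q leq0n.
have Qm : Q (p - b) = v by rewrite /Q leqnn.
have Qn : Q (a - b) = X a.
  rewrite /Q; case: ifP => H; first lia.
  by rewrite -G2n; congr g2; lia.
have DQ : forall s t, s <= a - b -> t <= a - b -> dist e (Q s) (Q t) = s - t + (t - s).
  apply: (geo esym conn QA); rewrite Q0 Qn DX //; lia.
have QP : forall t, t <= a - b -> Q t \in P -> Q t = X (b + t).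
  move=> t Ht /inP [s Hs Es].
  have H1 := DQ 0 t (leq0n _) Ht. have H2 := DQ t (a - b) Ht (leqnn _).
  rewrite Q0 Qn Es in H1 H2. rewrite DX in H1; try lia. rewrite DX in H2; try lia.
  by rewrite Es /X; congr nth; lia.
have [t1 [Ht1 Qt1 Mt1]] : exists t1, [/\ t1 < p - b, Q t1 \in P &
     forall t, t < p - b -> Q t \in P -> t <= t1].
  have ex : exists t, (t < p - b) && (Q t \in P).
    by exists 0; rewrite Q0 memX // andbT; lia.
  have ub : forall t, (t < p - b) && (Q t \in P) -> t <= p - b.
    by move=> t /andP [H _]; lia.
  case: (ex_maxnP (P := fun t => (t < p - b) && (Q t \in P)) ex ub) => t1 /andP [H1 H2] Hmax.
  by exists t1; split => // t Ht HQ; apply: Hmax; rewrite Ht HQ.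
have [t2 [Ht2 Ht2' Qt2 Mt2]] : exists t2, [/\ p - b < t2, t2 <= a - b, Q t2 \in P &
     forall t, p - b < t -> t <= a - b -> Q t \in P -> t2 <= t].
  have ex : exists t, [&& p - b < t, t <= a - b & Q t \in P].
    by exists (a - b); rewrite Qn memX // leqnn andbT; lia.
  case: (ex_minnP (P := fun t => [&& p - b < t, t <= a - b & Q t \in P]) ex) => t2 /and3P [H1 H2 H3] Hmin.
  by exists t2; split => // t Ht Ht' HQ; apply: Hmin; rewrite Ht Ht' HQ.
have [i Ei] : exists i, i = b + t1 by eauto.
have [j Ej] : exists j, j = b + t2 by eauto.
have Qi : Q t1 = X i by rewrite Ei; apply: QP => //; lia.
have Qj : Q t2 = X j by rewrite Ej; apply: QP => //; lia.
have Hij : i < j by lia.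
have Hjk : j < k by lia.
pose R := fun r => if (i <= r) && (r <= j) then Q (r - b) else X r.
have Ci : forall u, i <= u <= j -> dist e (X i) (Q (u - b)) = u - i.
  by move=> u Hu; rewrite -Qi DQ; lia.
have Cj : forall u, i <= u <= j -> dist e (X j) (Q (u - b)) = j - u.
  by move=> u Hu; rewrite -Qj DQ; lia.
have Mixed : forall r u, r < k -> (r < i) || (j < r) -> i <= u <= j ->
    dist e (X r) (Q (u - b)) = r - u + (u - r).
  move=> r u Hr Hrr Hu.
  have A1 := Tri (X r) (X i) (Q (u - b)). have A2 := Tri (X r) (X j) (Q (u - b)).
  have A3 := Tri (X r) (Q (u - b)) (X j). have A4 := Tri (X r) (Q (u - b)) (X i).
  rewrite Ci ?DX in A1. rewrite Cj ?DX in A2.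
  rewrite (Dsym (Q (u - b)) (X j)) Cj ?DX in A3. rewrite (Dsym (Q (u - b)) (X i)) Ci ?DX in A4.
  all: try lia.
have DR : forall r s, r < k -> s < k -> dist e (R r) (R s) = r - s + (s - r).
  move=> r s Hr Hs; rewrite /R; case: ifP => H1; case: ifP => H2.
  - rewrite DQ; lia.
  - rewrite Dsym Mixed //; lia.
  - rewrite Mixed //; lia.
  - exact: DX.
have Ri : R i = X i by rewrite /R; case: ifP => H; [rewrite -Qi; congr Q; lia | lia].
have Rj : R j = X j by rewrite /R; case: ifP => H; [rewrite -Qj; congr Q; lia | lia].
have HP' := iso_mkseq conn (g := R) (n := k) ltac:(lia) DR.
exists (mkseq (fun r => R (i + r)) (j - i).+1); split; last first.
  apply/mapP; exists (p - i); first by rewrite mem_iota; lia.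
  rewrite /R; case: ifP => H; [rewrite -Qm; congr Q; lia | lia].
exists (mkseq X i), (mkseq (fun r => X (i.+1 + r)) (j - i.+1)),
  (mkseq (fun r => X (j.+1 + r)) (k - j.+1)), (mkseq (fun r => R (i.+1 + r)) (j - i.+1)),
  (X i), (X j).
split; first split.
- have E := mkseq_nth v P; rewrite -/X -/k in E; rewrite -{1}E.
  by apply: mkseq_split; lia.
- rewrite (mkseq_split _ (i := 0) (j := j - i)); try lia.
  rewrite subnn /= addn0 Ri subnKC; last by lia.
  rewrite Rj; congr (_ :: _ ++ _ :: _).
  rewrite (_ : j - i - 1 = j - i.+1); last by lia.
  by apply: eq_mkseq => r; congr R; lia.
- by rewrite -size_eq0 size_mkseq; lia.
- have [] := iso_mkseq conn (g := fun r => R (i + r)) (n := (j - i).+1) ltac:(lia).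
    by move=> r s Hr Hs; rewrite DR; lia.
  by [].
- move=> z /mapP [r Hr ->] HzP; rewrite mem_iota in Hr.
  have ER : R (i + r) = Q (t1 + r) by rewrite /R; case: ifP => H; [congr Q; lia | lia].
  rewrite ER in HzP *.
  case: (ltngtP (t1 + r) (p - b)) => H.
  + left; have := Mt1 _ H HzP => Hle.
    by rewrite -Qi; congr Q; lia.
  + right; have := Mt2 (t1 + r) H ltac:(lia) HzP => Hle.
    by rewrite -Qj; congr Q; lia.
  + by move: HvP; rewrite -Qm -H HzP.
suff <- : mkseq R k = mkseq X i ++ X i :: mkseq (fun r => R (i.+1 + r)) (j - i.+1)
    ++ X j :: mkseq (fun r => X (j.+1 + r)) (k - j.+1) by [].
rewrite (mkseq_split R (i := i) (j := j)) //; rewrite Ri Rj.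
congr (_ ++ _ :: _ ++ _ :: _).
  rewrite /mkseq; apply/eq_in_map => r; rewrite mem_iota => Hr; rewrite /R; case: ifP => H //; lia.
rewrite /mkseq; apply/eq_in_map => r; rewrite mem_iota => Hr; rewrite /R; case: ifP => H //; lia.
Qed.

Theorem lemma2p8 (T : finType) (e : rel T) :
  symmetric e -> irreflexive e -> connected_graph e ->
  forall P : seq T, isometric_path e P -> 3 <= size P ->
  forall v : T, v \notin P ->
    (#|shadow e P v| = 1 <-> exists B : seq T, bypath e P B /\ v \in B).
Proof.
move=> esym _ conn P HP Hk v HvP; split.
  exact: fwd.
exact: back.
Qed.
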